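(* Let $U$ be the bilateral shift $(Ug)(n)=g(n-1)$ on $\ell^2(\mathbb Z)$. For every $h\in\mathbb N$, \[(U+U^* )^h=\sum_{k=0}^{\lfloor h/2\rfloor}\alpha_{h,k}\sum_{\substack{\ell,m\ge0\\ \ell+m=h-2k}}U^m(U^* )^\ell,\qquad\alpha_{h,k}:=\binom hk-\binom h{k-1}.\]
   Context: $\mathbb N=\{0,1,2,\dots\}$; convention $\binom h{-1}=0$. *)

(* Defs.v *)
From HB Require Import structures.
From mathcomp Require Import all_boot all_order all_algebra.
From mathcomp Require Import complex.
From mathcomp Require Import all_classical all_reals all_analysis.
Set Implicit Arguments. Unset Strict Implicit. Unset Printing Implicit Defensive.
Import Order.TTheory GRing.Theory Num.Theory.
Local Open Scope ring_scope.
Local Open Scope classical_set_scope.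

Definition in_l2 (R : realType) (g : int -> R[i]) : Prop :=
  (\esum_(n in [set: int]) ((ComplexField.Normc.normc (g n)) ^+ 2)%:E < +oo)%E.

Definition shiftU (R : realType) (g : int -> R[i]) : int -> R[i] :=
  fun n => g (n - 1).

(* Its Hilbert adjoint on l^2(Z): (U^* g)(n) = g(n+1). *)
Definition shiftUstar (R : realType) (g : int -> R[i]) : int -> R[i] :=
  fun n => g (n + 1).

Definition shiftUplusUstar (R : realType) (g : int -> R[i]) : int -> R[i] :=
  fun n => shiftU g n + shiftUstar g n.

Definition alpha (h k : nat) : int :=
  ('C(h, k))%:Z - (if k is k'.+1 then 'C(h, k') else 0%N)%:Z.

(* Main.v *)
Require Import Defs.
From HB Require Import structures.
From mathcomp Require Import all_boot all_order all_algebra.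
From mathcomp Require Import complex.
From mathcomp Require Import all_classical all_reals all_analysis.
From mathcomp Require Import zify ring.
Import Order.TTheory GRing.Theory Num.Theory.
Local Open Scope ring_scope.

Section Aux.
Variable V : pzRingType.

Lemma tele (h c : nat) : \sum_(k < c.+1) ((alpha h k)%:~R : V) = ('C(h, c))%:R.
Proof.
elim: c => [|c IH]; first by rewrite big_ord1 /alpha /= subr0.
rewrite big_ord_recr /= IH /alpha /= intrB !pmulrn addrC subrK.
by [].
Qed.

Lemma inner (h k : nat) (G : nat -> V) : (2 * k <= h)%N ->
  \sum_(m < (h - 2 * k).+1) G (k + m)%N =
  \sum_(j < h.+1) (if (k <= j <= h - k)%N then G j else 0).
Proof.
move=> hk.
rewrite -(big_mkord xpredT (fun m => G (k+m)%N)).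
rewrite -(big_mkord xpredT (fun j => if (k <= j <= h - k)%N then G j else 0)).
have hk1 : (k <= h.+1)%N by lia.
have hk2 : (k <= (h - k).+1)%N by lia.
have hk3 : ((h - k).+1 <= h.+1)%N by lia.
rewrite (big_cat_nat (leq0n k) hk1) /=.
rewrite (big_cat_nat hk2 hk3) /=.
rewrite [X in _ = X + _]big1_seq; last first.
  move=> i; rewrite mem_index_iota => /andP[_ H1].
  by case: ifP => //; lia.
rewrite add0r [X in _ = _ + X]big1_seq ?addr0; last first.
  move=> i; rewrite mem_index_iota => /andP[_ /andP[H1 _]].
  by case: ifP => //; lia.
have E := big_addn 0 (h-k).+1 k xpredT (fun i => if (k <= i <= h - k)%N then G i else 0).
rewrite add0n in E; rewrite E.
have -> : ((h - k).+1 - k = (h - 2 * k).+1)%N by lia.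
apply: eq_big_nat => i /andP[_ Hi]; rewrite addnC.
by case: ifP => //; lia.
Qed.

Lemma key (h : nat) (G : nat -> V) :
  \sum_(k < (h./2).+1) ((alpha h k)%:~R : V) * \sum_(m < (h - 2 * k).+1) G (k + m)%N
  = \sum_(j < h.+1) ('C(h, j))%:R * G j.
Proof.
rewrite (eq_bigr (fun k : 'I_(h./2).+1 => \sum_(j < h.+1)
   ((alpha h k)%:~R * (if (k <= j <= h - k)%N then G j else 0)))); last first.
  move=> k _; rewrite inner ?big_distrr //.
  have := ltn_ord k; rewrite ltnS => Hk.
  by rewrite -[h in (_ <= h)%N](odd_double_half h) -muln2 mulnC; lia.
rewrite exchange_big /=; apply: eq_bigr => j _.
set c := minn j (h - j).
have Hc : (c <= h./2)%N.
  rewrite /c; have := odd_double_half h; rewrite -muln2; have := ltn_ord j; lia.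
rewrite (eq_bigr (fun k : 'I_(h./2).+1 => if (k <= c)%N then (alpha h k)%:~R * G j else 0)); last first.
  move=> k _; have := ltn_ord j; rewrite /c; case: ifP => H1; case: ifP => H2 //; try lia.
  all: try by rewrite mulr0.
rewrite -(big_mkcond (fun k : 'I_ _ => (k <= c)%N)) /= -big_distrl /=.
have -> : \sum_(k < (h./2).+1 | (k <= c)%N) ((alpha h k)%:~R : V) = \sum_(k < c.+1) (alpha h k)%:~R.
  rewrite -(big_mkord (fun k => k <= c)%N (fun k => ((alpha h k)%:~R : V))).
  rewrite -(big_mkord xpredT (fun k => ((alpha h k)%:~R : V))).
  rewrite (big_nat_widen _ _ _ _ _ (_ : c.+1 <= (h./2).+1)%N) //.
rewrite tele; congr (_%:R * _).
rewrite /c; case: (leqP j (h - j)) => Hj.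
  by [].
rewrite bin_sub //; have := ltn_ord j; lia.
Qed.
End Aux.

Section Main.
Variable R : realType.

Lemma iterUs l (g : int -> R[i]) n : iter l (@shiftUstar R) g n = g (n + l%:Z).
Proof.
elim: l n => [|l IH] n /=; first by rewrite addr0.
by rewrite /shiftUstar IH; congr g; lia.
Qed.

Lemma iterU l (g : int -> R[i]) n : iter l (@shiftU R) g n = g (n - l%:Z).
Proof.
elim: l n => [|l IH] n /=; first by rewrite subr0.
by rewrite /shiftU IH; congr g; lia.
Qed.

Lemma iterS h (g : int -> R[i]) n : iter h (@shiftUplusUstar R) g n =
  \sum_(j < h.+1) ('C(h, j))%:R * g (n - h%:Z + 2 * j%:Z).
Proof.
elim: h g n => [|h IH] g n.
  by rewrite big_ord1 /= mul1r; congr g; lia.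
rewrite iterSr IH /shiftUplusUstar /shiftU /shiftUstar.
under eq_bigr do rewrite mulrDr.
rewrite big_split /= [RHS]big_ord_recl /=.
under [X in _ = _ + X]eq_bigr do rewrite binS natrD mulrDl.
rewrite big_split /= addrA; congr (_ + _).
  rewrite big_ord_recl [X in _ = _ + X]big_ord_recr /= (bin_small (ltnSn h)) mul0r addr0.
  congr (_ + _); first by rewrite !bin0; congr (_ * g _); lia.
  rewrite addr0; apply: eq_bigr => i _; congr (_ * g _); rewrite /bump /=; lia.
by apply: eq_bigr => i _; congr (_ * g _); rewrite /bump /=; lia.
Qed.
End Main.

Theorem corollary3p3 (R : realType) (h : nat) (g : int -> R[i]) (hg : in_l2 g)
  (n : int) :
  iter h (@shiftUplusUstar R) g n =
  \sum_(k < (h./2).+1)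
     (alpha h k)%:~R *
     \sum_(m < (h - 2 * k).+1)
        iter m (@shiftU R) (iter (h - 2 * k - m) (@shiftUstar R) g) n.
Proof.
rewrite iterS -(key _ h (fun j => g (n - h%:Z + 2 * j%:Z))).
apply: eq_bigr => k _; congr (_ * _).
have Hk : (2 * k <= h)%N.
  have := ltn_ord k; rewrite ltnS => Hk.
  by rewrite -[h in (_ <= h)%N](odd_double_half h) -muln2 mulnC; lia.
rewrite (reindex_inj rev_ord_inj) /=; apply: eq_bigr => m _.
rewrite iterU iterUs; have Hm := ltn_ord m; congr g; lia.
Qed.
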